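(* Under the hypotheses of the convergence-in-the-Bregman-distance theorem ($\delta>0$; (A), (B), (R), (D); $\theta^*$ the unique minimizer of $\mathcal{L}$ with $J(\theta^* )<\infty$; $d_k:=\mathbb{E}[D^{v^{(k)}}_{J_\delta}(\theta^*,\theta^{(k)})]$), there exist constants $c>0$ and $C>0$ such that if $\tau^{(k)}=\frac{c}{k+1}$ for all $k\ge0$, then $d_k\le\frac{C}{k+1}$ for all $k\ge0$.
   Context: $\Theta$ is a real Hilbert space. For a convex proper $J:\Theta\to(-\infty,\infty]$, $\partial J$ is its subdifferential and for $p\in\partial J(\theta)$, $D^p_J(\bar\theta,\theta)=J(\bar\theta)-J(\theta)-\langle p,\bar\theta-\theta\rangle$. $\mathrm{prox}_F(\bar\theta)=\arg\min_\theta\frac12\|\theta-\bar\theta\|^2+F(\theta)$; $J_\delta(\theta)=J(\theta)+\frac1{2\delta}\|\theta\|^2$. (R): $J$ convex, proper, lower semicontinuous. $(\Omega,F,\mathbb{P})$ probability space; $\mathcal{L}:\Theta\to\mathbb{R}$ Fréchet differentiable; $g:\Theta\times\Omega\to\Theta$ with $\mathbb{E}_\omega[g(\theta;\omega)]=\nabla\mathcal{L}(\theta)$. Iteration: deterministic $\theta^{(0)}$, $v^{(0)}\in\partial J_\delta(\theta^{(0)})$; $\omega^{(k)}$ independent with law $\mathbb{P}$; $g^{(k)}=g(\theta^{(k)};\omega^{(k)})$, $v^{(k+1)}=v^{(k)}-\tau^{(k)}g^{(k)}$, $\theta^{(k+1)}=\mathrm{prox}_{\delta J}(\delta v^{(k+1)})$;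 then $v^{(k)}\in\partial J_\delta(\theta^{(k)})$. All expectations appearing are assumed finite. (A): $\mathcal{L}\ge0$, continuously differentiable, $\nabla\mathcal{L}$ $L$-Lipschitz with $L\in(0,\infty)$. (B): $\exists\sigma>0$: $\mathbb{E}_\omega\|g(\theta;\omega)-\nabla\mathcal{L}(\theta)\|^2\le\sigma^2$ for all $\theta$. (D): $\exists\nu>0$: $\mathcal{L}(\tilde\theta)\ge\mathcal{L}(\theta)+\langle\nabla\mathcal{L}(\theta),\tilde\theta-\theta\rangle+\nu D^v_{J_\delta}(\tilde\theta,\theta)$ for all $\theta,\tilde\theta$, $v\in\partial J_\delta(\theta)$. *)

(* Defs.v *)
From HB Require Import structures.
From mathcomp Require Import all_boot all_order all_algebra.
From mathcomp Require Import all_classical all_reals all_analysis.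
Set Implicit Arguments. Unset Strict Implicit. Unset Printing Implicit Defensive.
Import Order.TTheory GRing.Theory Num.Theory.
Import numFieldNormedType.Exports.
Local Open Scope classical_set_scope.
Local Open Scope ring_scope.

Section Defs.
Context {R : realType} {V : normedModType R}.

Definition is_inner_product (ip : V -> V -> R) : Prop :=
  [/\ (forall x y, ip x y = ip y x),
      (forall (a : R) x y z, ip (a *: x + y) z = a * ip x z + ip y z) &
      (forall x, ip x x = `|x| ^+ 2)].

Definition convex_fun (J : V -> \bar R) : Prop :=
  forall x y (t : R), 0 < t < 1 ->
    (J (t *: x + (1 - t) *: y)%R <= t%:E * J x + (1 - t)%R%:E * J y)%E.
Definition proper_fun (J : V -> \bar R) : Prop :=
  (forall x, J x != -oo%E) /\ (exists x, (J x < +oo)%E).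
Definition lsc_fun (J : V -> \bar R) : Prop :=
  forall a : R, closed [set x | (J x <= a%:E)%E].

Definition subdiff (ip : V -> V -> R) (J : V -> \bar R) (th p : V) : Prop :=
  forall t, (J th + (ip p (t - th)%R)%:E <= J t)%E.

Definition bregman (ip : V -> V -> R) (J : V -> \bar R) (p thb th : V) : \bar R :=
  (J thb - J th - (ip p (thb - th)%R)%:E)%E.

Definition Jdelta (J : V -> \bar R) (delta : R) (th : V) : \bar R :=
  (J th + ((2 * delta)^-1 * `|th| ^+ 2)%R%:E)%E.

Definition is_prox (F : V -> \bar R) (thb th : V) : Prop :=
  forall t, (((2^-1) * `|th - thb| ^+ 2)%R%:E + F th
             <= ((2^-1) * `|t - thb| ^+ 2)%R%:E + F t)%E.

Definition frechet_gradient (ip : V -> V -> R) (L : V -> R) (gL : V -> V) : Prop :=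
  forall th, differentiable L th /\ (forall h, 'd L th h = ip (gL th) h).

Definition borel_measurable_to {d} {Om : measurableType d} (f : Om -> V) : Prop :=
  forall U : set V, open U -> measurable (f @^-1` U).

End Defs.

(* Expectation of a function of the first k draws omega^(0), ..., omega^(k-1)
   (given as the history list h, size h = k) where the draws are independent
   with law P: iterated integral, the last draw being integrated innermost. *)
Fixpoint expect_hist {d} {Om : measurableType d} {R : realType}
    (P : probability Om R) (k : nat) (f : seq Om -> \bar R) : \bar R :=
  match k with
  | 0 => f [::]
  | k'.+1 => expect_hist P k' (fun h => (\int[P]_w f (rcons h w))%E)
  end.

(* Main.v *)
Require Import Defs.
From HB Require Import structures.
From mathcomp Require Import all_boot all_order all_algebra.
From mathcomp Require Import all_classical all_reals all_analysis.
From mathcomp Require Import ring lra.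
Import Order.TTheory GRing.Theory Num.Theory.
Import numFieldNormedType.Exports.
Local Open Scope classical_set_scope.
Local Open Scope ring_scope.

Section IP.
Context {R : realType} {V : normedModType R} (ip : V -> V -> R).
Hypothesis Hip : is_inner_product ip.

Lemma ipC x y : ip x y = ip y x. Proof. by case: Hip. Qed.
Lemma ipN x : ip x x = `|x|^+2. Proof. by case: Hip. Qed.
Lemma ipDZl a x y z : ip (a *: x + y) z = a * ip x z + ip y z.
Proof. by case: Hip => _ H _; apply: H. Qed.
Lemma ip0l z : ip 0 z = 0.
Proof. have := ipDZl 1 0 0 z; rewrite scale1r addr0 mul1r => h; lra. Qed.
Lemma ipDl x y z : ip (x + y) z = ip x z + ip y z.
Proof. by have := ipDZl 1 x y z; rewrite scale1r mul1r. Qed.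
Lemma ipZl a x z : ip (a *: x) z = a * ip x z.
Proof. by have := ipDZl a x 0 z; rewrite !addr0 ip0l addr0. Qed.
Lemma ipNl x z : ip (- x) z = - ip x z.
Proof. by rewrite -scaleN1r ipZl mulN1r. Qed.
Lemma ipBl x y z : ip (x - y) z = ip x z - ip y z.
Proof. by rewrite ipDl ipNl. Qed.
Lemma ipDr x y z : ip z (x + y) = ip z x + ip z y.
Proof. by rewrite ipC ipDl !(ipC z). Qed.
Lemma ipZr a x z : ip z (a *: x) = a * ip z x.
Proof. by rewrite ipC ipZl (ipC z). Qed.
Lemma ipNr x z : ip z (- x) = - ip z x.
Proof. by rewrite ipC ipNl (ipC z). Qed.
Lemma ipBr x y z : ip z (x - y) = ip z x - ip z y.
Proof. by rewrite ipDr ipNr. Qed.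
Lemma ip_ge0 x : 0 <= ip x x.
Proof. by rewrite ipN sqr_ge0. Qed.

Lemma le_lim (x y z : R) : 0 <= z ->
  (forall s, 0 < s < 1 -> x <= y + s * z) -> x <= y.
Proof.
move=> z0 H; rewrite leNgt; apply/negP => hxy.
set e := x - y.
have e0 : 0 < e by rewrite /e subr_gt0.
set s := e / (2 * (z + e)).
have d0 : 0 < 2 * (z + e) by lra.
have hs : 0 < s < 1.
  apply/andP; split; first by rewrite /s divr_gt0.
  by rewrite /s ltr_pdivrMr // mul1r; lra.
have h1 := H s hs.
have : s * z < e.
  rewrite /s mulrAC ltr_pdivrMr //.
  rewrite ltr_pM2l //; lra.
have eE : e = x - y by [].
lra.
Qed.

Lemma young (d s : R) x y : 0 < d ->
  s * ip x y <= (d * s ^+ 2 / 2) * ip x x + (2 * d)^-1 * ip y y.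
Proof.
move=> d0.
have h := ip_ge0 ((d * s) *: x - y).
rewrite !(ipBl, ipBr, ipZl, ipZr) (ipC y x) in h.
rewrite -(ler_pM2l (_ : 0 < 2 * d)); last lra.
have d2 : 2 * d != 0 by rewrite lt0r_neq0 //; lra.
rewrite mulrDr !mulrA (mulfV d2).
lra.
Qed.


Section Conv.
Variables (J : V -> \bar R) (delta : R).
Hypotheses (d0 : 0 < delta) (cJ : convex_fun J) (pJ : proper_fun J).

Definition Jd t := fine (J t) + (2 * delta)^-1 * `|t| ^+ 2.

Lemma Jdelta_fin t : J t \is a fin_num -> Jdelta J delta t = (Jd t)%:E.
Proof. by move=> ft; rewrite /Jdelta /Jd EFinD fineK. Qed.

Lemma fin_ltJ t : (J t < +oo)%E -> J t \is a fin_num.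
Proof. by move=> h; rewrite fin_numE (proj1 pJ t) /= -ltey. Qed.

Lemma bregman_fin v a b : J a \is a fin_num -> J b \is a fin_num ->
  bregman ip (Jdelta J delta) v a b = (Jd a - Jd b - ip v (a - b))%:E.
Proof. by move=> fa fb; rewrite /bregman !Jdelta_fin // -!EFinB. Qed.

Lemma cvx_fin x y s : 0 < s < 1 -> J x \is a fin_num -> J y \is a fin_num ->
  J (s *: x + (1 - s) *: y) \is a fin_num /\
  fine (J (s *: x + (1 - s) *: y)) <= s * fine (J x) + (1 - s) * fine (J y).
Proof.
move=> hs fx fy; have h := cJ x y s hs.
rewrite -(fineK fx) -(fineK fy) -!EFinM -EFinD in h.
have fp : J (s *: x + (1 - s) *: y) \is a fin_num.
  by apply: fin_ltJ; apply: (le_lt_trans h); rewrite ltey.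
split => //; rewrite -(fineK fp) lee_fin in h; exact: h.
Qed.

Lemma subdiff_strong th v : subdiff ip (Jdelta J delta) th v ->
  J th \is a fin_num /\ forall t, J t \is a fin_num ->
    Jd th + ip v (t - th) + (2 * delta)^-1 * `|t - th| ^+ 2 <= Jd t.
Proof.
move=> hs.
have fth : J th \is a fin_num.
  rewrite fin_numE (proj1 pJ th) /=; apply/negP => /eqP hinf.
  case: (proj2 pJ) => x hx; have fx := @fin_ltJ x hx.
  have := hs x; rewrite /Jdelta hinf !addye // leye_eq.
  by rewrite -(fineK fx) -EFinD.
split => // t ft.
apply: (@le_lim _ (Jd t) ((2 * delta)^-1 * `|t - th| ^+ 2)).
  apply: mulr_ge0; last exact: sqr_ge0. by rewrite invr_ge0 mulr_ge0 // ltW.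
move=> s hs'.
have [fp hp] := cvx_fin t th s hs' ft fth.
have := hs (s *: t + (1 - s) *: th).
rewrite !Jdelta_fin // lee_fin /Jd -!ipN => h1.
move: hp h1.
set jp := fine (J (s *: t + (1 - s) *: th)); set jt := fine (J t); set jth := fine (J th).
rewrite !(ipBl, ipBr, ipDl, ipDr, ipZl, ipZr, ipNl, ipNr) (ipC th t).
set q := (2 * delta)^-1.
move: hs' => /andP [s0 s1] hp h1.
rewrite -(ler_pM2l s0).
lra.
Qed.

Lemma prox_subdiff th v :
  is_prox (fun t => (delta%:E * J t)%E) (delta *: v) th ->
  subdiff ip (Jdelta J delta) th v.
Proof.
move=> hp.
have fth : J th \is a fin_num.
  rewrite fin_numE (proj1 pJ th) /=; apply/negP => /eqP hinf.
  case: (proj2 pJ) => x hx; have fx := @fin_ltJ x hx.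
  have := hp x; rewrite hinf gt0_muley ?lte_fin // addey // leye_eq.
  by rewrite -(fineK fx) -EFinM -EFinD.
move=> t; case: (boolP (J t \is a fin_num)) => ft; last first.
  move: ft; rewrite fin_numE (proj1 pJ t) /= => /negPn/eqP ht.
  by rewrite /Jdelta ht addye // leey.
rewrite !Jdelta_fin // lee_fin.
set jt := fine (J t); set jth := fine (J th).
have key : delta * jth <= (ip th (t - th) - delta * ip v (t - th) + delta * jt)
    + 0 * ip (t - th) (t - th).
  rewrite mul0r addr0.
  apply: (@le_lim _ _ (ip (t - th) (t - th) / 2)).
    by rewrite divr_ge0 // ip_ge0.
  move=> s hs'.
  have [fp hpp] := cvx_fin t th s hs' ft fth.
  have h1 := hp (s *: t + (1 - s) *: th).
  rewrite -(fineK fth) -(fineK fp) -!EFinM -!EFinD lee_fin -!ipN -/jth in h1.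
  have hd : delta * fine (J (s *: t + (1 - s) *: th)) <= delta * (s * jt + (1 - s) * jth).
    by rewrite ler_wpM2l // ltW.
  move: h1 hd; set jp := fine (J (s *: t + (1 - s) *: th)).
  rewrite !(ipBl, ipBr, ipDl, ipDr, ipZl, ipZr, ipNl, ipNr) (ipC th t) (ipC v t) (ipC v th).
  move: hs' => /andP [s0 s1] h1 hd.
  rewrite -(ler_pM2l s0).
  lra.
rewrite mul0r addr0 in key.
have h0 := ip_ge0 (t - th).
rewrite /Jd -!ipN -/jth -/jt.
have d2 : 2 * delta != 0 by rewrite lt0r_neq0 // mulr_gt0.
rewrite -(ler_pM2l (_ : 0 < 2 * delta)); last by rewrite mulr_gt0.
rewrite !mulrDr !mulrA (mulfV d2).
move: key h0.
rewrite !(ipBl, ipBr, ipDl, ipDr, ipZl, ipZr, ipNl, ipNr) (ipC th t) (ipC v t) (ipC v th).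
lra.
Qed.

Lemma step_pt (th th' thst v g gr : V) (tau : R) :
  J th' \is a fin_num ->
  (forall t, J t \is a fin_num ->
    Jd th + ip v (t - th) + (2 * delta)^-1 * `|t - th| ^+ 2 <= Jd t) ->
  Jd thst - Jd th' - ip (v - tau *: g) (thst - th') <=
  (Jd thst - Jd th - ip v (thst - th)) - (delta * tau ^+ 2 / 2) * `|gr| ^+ 2
  + ip g (tau *: (thst - th) + (2 * (delta * tau ^+ 2 / 2)) *: gr)
  + (delta * tau ^+ 2 / 2) * `|g - gr| ^+ 2.
Proof.
move=> f' hst.
have h1 := hst th' f'.
have h2 := young delta tau g (th - th') d0.
move: h1 h2; rewrite -!ipN.
rewrite !(ipBl, ipBr, ipDl, ipDr, ipZl, ipZr, ipNl, ipNr).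
rewrite ?(ipC th' th) ?(ipC gr g) ?(ipC th v) ?(ipC th' v) ?(ipC thst v).
move=> h1 h2.
lra.
Qed.

End Conv.
End IP.

Section Meas.
Context {dO : measure_display} {Om : measurableType dO} {R : realType}.

Lemma int_mono (mu : {measure set Om -> \bar R}) (f g : Om -> \bar R) :
  (forall x, (0 <= f x)%E) -> (forall x, (f x <= g x)%E) ->
  (\int[mu]_x f x <= \int[mu]_x g x)%E.
Proof.
move=> f0 fg.
have g0 x : (0 <= g x)%E by apply: le_trans (f0 x) (fg x).
rewrite !ge0_integralTE //; apply: ereal_sup_le => _ [h hf <-].
by exists h => // x; apply: le_trans (hf x) (fg x).
Qed.

Lemma expect_hist_ge0 (P : probability Om R) k (f : seq Om -> \bar R) :
  (forall h, (0 <= f h)%E) -> (0 <= expect_hist P k f)%E.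
Proof.
elim: k f => [|k IH] f f0 //=.
by apply: IH => h; apply: integral_ge0 => w _.
Qed.

Lemma expect_hist_cons (P : probability Om R) k (f : seq Om -> \bar R) :
  expect_hist P k.+1 f = (\int[P]_w expect_hist P k (fun h => f (w :: h)))%E.
Proof.
elim: k f => [|k IH] f //.
transitivity (expect_hist P k.+1 (fun h => \int[P]_w f (rcons h w)))%E => //.
Qed.

Lemma meas_sq {V : normedModType R} (f : Om -> V) (a : V) :
  borel_measurable_to f -> measurable_fun setT (fun w => `|f w - a| ^+ 2).
Proof.
move=> hf; apply: (measurability _ (measurable_realfun.RGenOpens.measurableE R)).
move=> _ [_ [x [y ->]] <-]; rewrite setTI.
have : open ((fun z : V => `|z - a| ^+ 2) @^-1` `]x, y[).
  have hc : continuous (fun z : V => `|z - a| ^+ 2).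
    move=> z; apply: (continuous_comp (f := fun z => `|z - a|) (g := fun r => r ^+ 2)).
      apply: (continuous_comp (f := fun z => z - a) (g := Num.norm)).
        by apply: cvgB; [exact: cvg_id | exact: cvg_cst].
      exact: norm_continuous.
    exact: exprn_continuous.
  by move/continuousP : hc; apply; apply: interval_open.
by move/hf.
Qed.

Lemma int_step {V : normedModType R} (ip : V -> V -> R) (Hip : is_inner_product ip)
  (P : probability Om R) (gw : Om -> V) (gr z : V) (A' D B' kap sig : R) :
  borel_measurable_to gw ->
  (forall h, P.-integrable setT (fun w => (ip (gw w) h)%:E)) ->
  (forall h, (\int[P]_w (ip (gw w) h)%:E = (ip gr h)%:E)%E) ->
  (\int[P]_w (`|gw w - gr| ^+ 2)%:E <= (sig ^+ 2)%:E)%E ->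
  0 <= A' -> 0 <= kap ->
  (\int[P]_w ((A' * (D - kap * `|gr| ^+ 2 + ip (gw w) z + kap * `|gw w - gr| ^+ 2) + B')%:E)
   <= (A' * (D - kap * `|gr| ^+ 2 + ip gr z + kap * sig ^+ 2) + B')%:E)%E.
Proof.
move=> gm gi gu hS A0 k0.
have i3 : P.-integrable setT (fun w => (`|gw w - gr| ^+ 2)%:E).
  apply/integrableP; split; first exact/measurable_realfun.measurable_EFinP/meas_sq.
  under eq_integral => x _ do rewrite gee0_abs ?lee_fin ?sqr_ge0 //.
  by apply: le_lt_trans hS _; rewrite ltry.
have -> : (fun w => (A' * (D - kap * `|gr| ^+ 2 + ip (gw w) z + kap * `|gw w - gr| ^+ 2) + B')%:E)
  = (fun w => (A' * (D - kap * `|gr| ^+ 2) + B')%:E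
       + ((ip (gw w) (A' *: z))%:E + (A' * kap)%:E * (`|gw w - gr| ^+ 2)%:E))%E.
  apply: funext => w; rewrite (ipZr ip Hip) -EFinM -!EFinD; congr (_%:E); ring.
rewrite integralD //; last 2 first.
- exact: finite_measure_integrable_cst.
- exact: (integrableD measurableT (gi _) (integrableZl measurableT _ i3)).
rewrite integralD //; last exact: (integrableZl measurableT _ i3).
rewrite integral_cst //. rewrite [X in (_ * X)%E]probability_setT mule1 gu integralZl //.
set S := (\int[P]_w (`|gw w - gr| ^+ 2)%:E)%E in hS *.
have S0 : (0 <= S)%E by apply: integral_ge0 => w _; rewrite lee_fin sqr_ge0.
have fS : S \is a fin_num by rewrite ge0_fin_numE //; apply: le_lt_trans hS _; rewrite ltry.
rewrite -(fineK fS) -EFinM -!EFinD lee_fin.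
move: hS; rewrite -(fineK fS) lee_fin => hS.
have hk : A' * kap * fine S <= A' * kap * sig ^+ 2 by rewrite ler_wpM2l // mulr_ge0.
rewrite (ipZr ip Hip).
lra.
Qed.

End Meas.

Section Scalar.
Context {R : realType}.

Fixpoint Aco (a : nat -> R) j m : R :=
  match m with 0 => 1 | m'.+1 => a j * Aco a j.+1 m' end.
Fixpoint Bco (a b : nat -> R) j m : R :=
  match m with 0 => 0 | m'.+1 => Aco a j.+1 m' * b j + Bco a b j.+1 m' end.

Lemma Aco_succ a j m : Aco a j m.+1 = a (j + m)%N * Aco a j m.
Proof.
elim: m j => [|m IH] j; first by rewrite addn0.
transitivity (a j * Aco a j.+1 m.+1) => //.
rewrite IH /= addSnnS; ring.
Qed.

Lemma Bco_succ a b j m : Bco a b j m.+1 = a (j + m)%N * Bco a b j m + b (j + m)%N.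
Proof.
elim: m j => [|m IH] j; first by rewrite addn0 /=; ring.
transitivity (Aco a j.+1 m.+1 * b j + Bco a b j.+1 m.+1) => //.
rewrite IH Aco_succ /= addSnnS; ring.
Qed.

Lemma Aco_ge0 a j m : (forall k, 0 <= a k) -> 0 <= Aco a j m.
Proof. by move=> a0; elim: m j => [|m IH] j //=; rewrite mulr_ge0. Qed.

Lemma Bco_ge0 a b j m : (forall k, 0 <= a k) -> (forall k, 0 <= b k) ->
  0 <= Bco a b j m.
Proof.
move=> a0 b0; elim: m j => [|m IH] j //=.
by rewrite addr_ge0 // mulr_ge0 // Aco_ge0.
Qed.

Fixpoint mxf (w : nat -> R) n : R :=
  match n with 0 => w 0%N | n'.+1 => Num.max (mxf w n') (w n) end.

Lemma mxf_ge w k n : (k <= n)%N -> w k <= mxf w n.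
Proof.
elim: n => [|n IH]; first by rewrite leqn0 => /eqP ->.
rewrite leq_eqVlt => /orP [/eqP ->|hk] /=; rewrite le_max ?lexx ?orbT //.
by rewrite IH.
Qed.

Lemma rate (a b : nat -> R) (M Q u0 : R) : 0 <= M -> 0 < Q -> 0 <= u0 ->
  (forall k, 0 <= a k) -> (forall k, 0 <= b k) ->
  (forall k, a k <= Num.max 0 (1 - 2 / k.+1%:R + M / (k.+1%:R) ^+ 2)) ->
  (forall k, b k <= Q / (k.+1%:R) ^+ 2) ->
  exists C, 0 < C /\ forall k, Aco a 0 k * u0 + Bco a b 0 k <= C / k.+1%:R.
Proof.
move=> M0 Q0 u00 a0 b0 ha hb.
set u := fun k => Aco a 0 k * u0 + Bco a b 0 k.
have uS k : u k.+1 = a k * u k + b k.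
  by rewrite /u Aco_succ Bco_succ add0n; ring.
have uge0 k : 0 <= u k by rewrite addr_ge0 ?mulr_ge0 ?Aco_ge0 ?Bco_ge0.
set w := fun k => k.+1%:R * u k.
have [K hK] : exists K : nat, 4 * M + 3 <= K%:R.
  exists (Num.Def.archi_bound (4 * M + 3)); apply: ltW; apply: archi_boundP; lra.
set W := Num.max (4 * Q) (mxf w K).
have W4 : 4 * Q <= W by rewrite le_max lexx.
have wW : forall k, w k <= W.
  elim=> [|k IH].
    by apply: le_trans (@mxf_ge w 0 K (leq0n K)) _; rewrite le_max lexx orbT.
  case: (leqP k.+1 K) => hkK.
    by apply: le_trans (@mxf_ge w k.+1 K hkK) _; rewrite le_max lexx orbT.
  set n : R := k.+1%:R.
  have hn : 4 * M + 3 <= n.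
    apply: le_trans hK _; rewrite /n ler_nat; exact: ltnW.
  have n0 : 0 < n by lra.
  have nS : k.+2%:R = n + 1 by rewrite /n -addn1 natrD.
  have hwy : n * u k <= W by exact: IH.
  have hak := ha k; rewrite -/n in hak.
  have hbk := hb k; rewrite -/n in hbk.
  move: hwy hak hbk; clearbody n => hwy hak hbk.
  have hy := uge0 k.
  have hA : n ^+ 2 * a k <= n ^+ 2 - 2 * n + M.
    move: hak.
    have -> : Num.max 0 (1 - 2 / n + M / n ^+ 2) = 1 - 2 / n + M / n ^+ 2.
      have h2n : 2 / n <= 1 by rewrite ler_pdivrMr // mul1r; lra.
      have : 0 <= M / n ^+ 2 by rewrite divr_ge0 // sqr_ge0.
      move=> hM.
      have hh : 0 <= 1 - 2 / n + M / n ^+ 2 by lra.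
      by apply/max_idPr.
    move=> h; rewrite -(ler_pM2l (_ : 0 < n ^+ 2)) in h; last by rewrite exprn_gt0.
    apply: (le_trans h).
    have nn : n != 0 by rewrite lt0r_neq0.
    have e : n ^+ 2 * (1 - 2 / n + M / n ^+ 2) = n ^+ 2 - 2 * n + M.
      by field.
    by rewrite e.
  have hb' : n ^+ 2 * b k <= Q.
    move: hbk; rewrite ler_pdivlMr ?exprn_gt0 // mulrC //.
  have c10 : 0 <= n ^+ 2 - 2 * n + M by nra.
  have h1 : (n ^+ 2 * a k) * (n * u k) <= (n ^+ 2 - 2 * n + M) * W.
    apply: le_trans (ler_wpM2r _ hA) (ler_wpM2l c10 hwy).
    by rewrite mulr_ge0 // ltW.
  have h1' : (n + 1) * ((n ^+ 2 * a k) * (n * u k)) <= (n + 1) * ((n ^+ 2 - 2 * n + M) * W).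
    by rewrite ler_wpM2l //; lra.
  have hb'' : (n + 1) * n * (n ^+ 2 * b k) <= (n + 1) * n * Q.
    by rewrite ler_wpM2l // mulr_ge0 //; lra.
  have X0 : 0 <= n ^+ 2 + 2 * n - M * n - M by nra.
  have h3 : (n ^+ 2 + n) * Q <= W * (n ^+ 2 + 2 * n - M * n - M).
    apply: le_trans (_ : 4 * Q * (n ^+ 2 + 2 * n - M * n - M) <= _); last first.
      by rewrite ler_wpM2r.
    have : 0 <= 3 * n ^+ 2 + 7 * n - 4 * M * n - 4 * M by nra.
    nra.
  rewrite /w uS nS.
  rewrite -(ler_pM2l (_ : 0 < n ^+ 3)); last by rewrite exprn_gt0.
  move: h1' hb'' h3; rewrite !exprSr !expr0 !mul1r.
  lra.
exists W; split; first by lra.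
move=> k; rewrite -/(u k) ler_pdivlMr // mulrC; exact: wW.
Qed.


Lemma e1_aux (nu n D : R) : nu != 0 -> n != 0 ->
  (2 / nu) / n * (- (nu * D)) = - (2 / n) * D.
Proof. by move=> h1 h2; field; rewrite h1 h2. Qed.

Lemma e2_aux (delta nu n D K2 Lc sigma : R) : nu != 0 -> n != 0 ->
  delta * ((2 / nu) / n) ^+ 2 / 2 * (2 * K2 + 4 * delta * Lc ^+ 2 * D)
  + delta * ((2 / nu) / n) ^+ 2 / 2 * sigma ^+ 2
  = delta * (2 / nu) ^+ 2 / 2 * (sigma ^+ 2 + 2 * K2) / n ^+ 2
    + 2 * delta ^+ 2 * Lc ^+ 2 * (2 / nu) ^+ 2 / n ^+ 2 * D.
Proof. by move=> h1 h2; field; rewrite h1 h2. Qed.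

End Scalar.

Theorem corollary3p6
  (R : realType) (V : completeNormedModType R) (ip : V -> V -> R)
  (J : V -> \bar R) (delta : R)
  (dO : measure_display) (Om : measurableType dO) (P : probability Om R)
  (L : V -> R) (gL : V -> V) (g : V -> Om -> V)
  (Lc sigma nu : R) (thstar th0 v0 : V) :
  (* Theta is a real Hilbert space *)
  is_inner_product ip ->
  0 < delta ->
  (* (R) *)
  convex_fun J -> proper_fun J -> lsc_fun J ->
  (* L Frechet differentiable with gradient gL; g unbiased estimator *)
  frechet_gradient ip L gL ->
  (forall th, borel_measurable_to (g th)) ->
  (forall th h, P.-integrable setT (fun w => (ip (g th w) h)%:E)) ->
  (forall th h, (\int[P]_w (ip (g th w) h)%:E = (ip (gL th) h)%:E)%E) ->
  (* (A) *)
  (forall th, 0 <= L th) -> continuous gL -> 0 < Lc ->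
  (forall th th', `|gL th - gL th'| <= Lc * `|th - th'|) ->
  (* (B) *)
  0 < sigma ->
  (forall th, (\int[P]_w (`|g th w - gL th| ^+ 2)%:E <= (sigma ^+ 2)%:E)%E) ->
  (* (D) *)
  0 < nu ->
  (forall th tht v, subdiff ip (Jdelta J delta) th v ->
     ((L th + ip (gL th) (tht - th))%:E
        + nu%:E * bregman ip (Jdelta J delta) v tht th <= (L tht)%:E)%E) ->
  (* thstar is the unique minimizer of L, and J(thstar) < oo *)
  (forall th, L thstar <= L th) ->
  (forall th, (forall t, L th <= L t) -> th = thstar) ->
  (J thstar < +oo)%E ->
  (* initialization *)
  subdiff ip (Jdelta J delta) th0 v0 ->
  exists c C : R, 0 < c /\ 0 < C /\
    forall (theta v : seq Om -> V),
      theta [::] = th0 -> v [::] = v0 ->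
      (forall h w, v (rcons h w)
                   = v h - (c / (size h).+1%:R) *: g (theta h) w) ->
      (forall h w, is_prox (fun t => delta%:E * J t)%E
                     (delta *: v (rcons h w)) (theta (rcons h w))) ->
      forall k : nat,
        (expect_hist P k (fun h => bregman ip (Jdelta J delta) (v h) thstar (theta h))
         <= (C / k.+1%:R)%:E)%E.
Proof.
move=> Hip d0 cJ pJ _ hgrad gmeas gint gunb L0 _ Lc0 Lip s0 hB nu0 hD Lmin Luniq Jst sub0.
have fst : J thstar \is a fin_num := fin_ltJ J pJ thstar Jst.
have [fth0 st0] := subdiff_strong ip Hip J delta d0 cJ pJ th0 v0 sub0.
pose c := 2 / nu.
have c0 : 0 < c by rewrite divr_gt0.
pose K2 := `|gL thstar| ^+ 2.
pose M := 2 * delta ^+ 2 * Lc ^+ 2 * c ^+ 2.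
pose Q := delta * c ^+ 2 / 2 * (sigma ^+ 2 + 2 * K2).
pose a := fun k : nat => Num.max 0 (1 - 2 / k.+1%:R + M / (k.+1%:R) ^+ 2).
pose b := fun k : nat => Q / (k.+1%:R) ^+ 2.
pose D0 := Jd J delta thstar - Jd J delta th0 - ip v0 (thstar - th0).
have q0 : 0 < (2 * delta)^-1 by rewrite invr_gt0 mulr_gt0.
have D0ge : 0 <= D0.
  have h1 := st0 thstar fst.
  have h2 := mulr_ge0 (ltW q0) (sqr_ge0 `|thstar - th0|).
  rewrite /D0; lra.
have M0 : 0 <= M.
  rewrite /M; apply: mulr_ge0; last exact: sqr_ge0.
  apply: mulr_ge0; last exact: sqr_ge0.
  apply: mulr_ge0; last exact: sqr_ge0.
  by [].
have Q0 : 0 < Q.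
  have h1 : 0 <= K2 by rewrite /K2 sqr_ge0.
  have h2 : 0 < sigma ^+ 2 by rewrite exprn_gt0.
  rewrite /Q; apply: mulr_gt0; last by lra.
  by rewrite divr_gt0 // mulr_gt0 // exprn_gt0.
have a0 k : 0 <= a k by rewrite /a le_max lexx.
have b0 k : 0 <= b k by rewrite /b divr_ge0 // ?sqr_ge0 // ltW.
have [C [C0 HC]] := rate a b M Q D0 M0 Q0 D0ge a0 b0 (fun k => lexx _) (fun k => lexx _).
exists c, C; split => //; split => //.
move=> theta v th_0 v_0 vrec prox.
have subd : forall h, subdiff ip (Jdelta J delta) (theta h) (v h).
  move=> h; case/lastP: h => [|h w]; first by rewrite th_0 v_0.
  exact: (prox_subdiff ip Hip J delta d0 cJ pJ _ _ (prox h w)).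
have str : forall h, J (theta h) \is a fin_num /\ (forall t, J t \is a fin_num ->
    Jd J delta (theta h) + ip (v h) (t - theta h)
    + (2 * delta)^-1 * `|t - theta h| ^+ 2 <= Jd J delta t).
  move=> h; exact: (subdiff_strong ip Hip J delta d0 cJ pJ _ _ (subd h)).
pose Dr := fun h => Jd J delta thstar - Jd J delta (theta h) - ip (v h) (thstar - theta h).
have Dbr h : bregman ip (Jdelta J delta) (v h) thstar (theta h) = (Dr h)%:E.
  exact: (bregman_fin ip J delta (v h) thstar (theta h) fst (str h).1).
have Dlb h : (2 * delta)^-1 * `|thstar - theta h| ^+ 2 <= Dr h.
  have := (str h).2 thstar fst; rewrite /Dr; lra.
have Dge0 h : 0 <= Dr h.
  apply: le_trans (Dlb h); exact: mulr_ge0 (ltW q0) (sqr_ge0 _).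
have main : forall m h, (expect_hist P m (fun h' => bregman ip (Jdelta J delta)
      (v (h ++ h')) thstar (theta (h ++ h')))
    <= (Aco a (size h) m * Dr h + Bco a b (size h) m)%:E)%E.
  elim=> [|m IH] h.
    by rewrite /= cats0 Dbr mul1r addr0.
  rewrite expect_hist_cons.
  pose j := size h.
  pose n : R := j.+1%:R.
  have n0 : 0 < n by rewrite /n ltr0n.
  pose tau := c / n.
  pose kap := delta * tau ^+ 2 / 2.
  pose gr := gL (theta h).
  pose z := tau *: (thstar - theta h) + (2 * kap) *: gr.
  pose U := fun w => Dr h - kap * `|gr| ^+ 2 + ip (g (theta h) w) z
                     + kap * `|g (theta h) w - gr| ^+ 2.
  have hU w : Dr (rcons h w) <= U w.
    rewrite /Dr /U vrec.
    exact: (step_pt ip Hip J delta d0 (theta h) (theta (rcons h w)) thstar (v h)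
              (g (theta h) w) gr tau (str (rcons h w)).1 (str h).2).
  have A0 := Aco_ge0 a j.+1 m a0.
  have kap0 : 0 <= kap by rewrite /kap divr_ge0 // mulr_ge0 // ?sqr_ge0 // ltW.
  have IH' w : (expect_hist P m (fun h0 => bregman ip (Jdelta J delta)
        (v (h ++ w :: h0)) thstar (theta (h ++ w :: h0)))
      <= (Aco a j.+1 m * Dr (rcons h w) + Bco a b j.+1 m)%:E)%E.
    have := IH (rcons h w); rewrite size_rcons.
    have -> : (fun h0 => bregman ip (Jdelta J delta) (v (h ++ w :: h0)) thstar
        (theta (h ++ w :: h0))) = (fun h0 => bregman ip (Jdelta J delta)
        (v (rcons h w ++ h0)) thstar (theta (rcons h w ++ h0))).
      by apply: funext => h0; rewrite cat_rcons.
    by [].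
  apply: le_trans (int_mono P _ (fun w => ((Aco a j.+1 m * U w + Bco a b j.+1 m)%:E)) _ _) _.
  - move=> w; apply: expect_hist_ge0 => h'; rewrite Dbr lee_fin; exact: Dge0.
  - move=> w; apply: le_trans (IH' w) _.
    by rewrite lee_fin lerD2r ler_wpM2l // hU.
  apply: le_trans (int_step ip Hip P (g (theta h)) gr z (Aco a j.+1 m) (Dr h)
     (Bco a b j.+1 m) kap sigma (gmeas _) (gint _) (gunb _) (hB _) A0 kap0) _.
  have AS : Aco a j m.+1 = a j * Aco a j.+1 m by [].
  have BS : Bco a b j m.+1 = Aco a j.+1 m * b j + Bco a b j.+1 m by [].
  rewrite AS BS lee_fin.
  suff key : Dr h - kap * `|gr| ^+ 2 + ip gr z + kap * sigma ^+ 2 <= a j * Dr h + b j.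
    have := ler_wpM2l A0 key; lra.
  have ipz : ip gr z = tau * ip gr (thstar - theta h) + 2 * kap * `|gr| ^+ 2.
    by rewrite /z (ipDr ip Hip) !(ipZr ip Hip) (ipN ip Hip) mulrA.
  have hDh : L (theta h) + ip gr (thstar - theta h) + nu * Dr h <= L thstar.
    by have := hD (theta h) thstar (v h) (subd h); rewrite Dbr -EFinM -EFinD lee_fin.
  have hLm := Lmin (theta h).
  have tau0 : 0 <= tau by rewrite /tau divr_ge0 // ltW.
  have hip : ip gr (thstar - theta h) <= - (nu * Dr h) by lra.
  have htip := ler_wpM2l tau0 hip.
  have nn : n != 0 by rewrite lt0r_neq0.
  have nun : nu != 0 by rewrite lt0r_neq0.
  have e1 : tau * (- (nu * Dr h)) = - (2 / n) * Dr h.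
    exact: e1_aux.
  have hL := Lip (theta h) thstar.
  have htri : `|gr| <= `|gL thstar| + `|gr - gL thstar|.
    by have := ler_normD (gL thstar) (gr - gL thstar); rewrite [gL thstar + _]addrC subrK.
  have he2 : `|thstar - theta h| ^+ 2 <= Dr h * (2 * delta).
    by have := Dlb h; rewrite mulrC ler_pdivrMr // mulr_gt0.
  rewrite [`|theta h - thstar|]distrC -/gr in hL.
  have hx : `|gr| <= `|gL thstar| + Lc * `|thstar - theta h| by lra.
  have hgr2 : `|gr| ^+ 2 <= 2 * K2 + 2 * (Lc ^+ 2 * `|thstar - theta h| ^+ 2).
    have n1 := normr_ge0 gr; have n2 := normr_ge0 (gL thstar).
    have n3 : 0 <= Lc * `|thstar - theta h| by rewrite mulr_ge0 // ltW.
    have s1 := ler_pM n1 n1 hx hx.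
    have s2 := sqr_ge0 (`|gL thstar| - Lc * `|thstar - theta h|).
    rewrite /K2 !expr2 in s2 *; lra.
  have hLe : Lc ^+ 2 * `|thstar - theta h| ^+ 2 <= Lc ^+ 2 * (Dr h * (2 * delta)).
    by rewrite ler_wpM2l // sqr_ge0.
  have hgr : `|gr| ^+ 2 <= 2 * K2 + 4 * delta * Lc ^+ 2 * Dr h by lra.
  have hk := ler_wpM2l kap0 hgr.
  have e2 : kap * (2 * K2 + 4 * delta * Lc ^+ 2 * Dr h) + kap * sigma ^+ 2
      = b j + M / n ^+ 2 * Dr h.
    exact: e2_aux.
  have ha : (1 - 2 / n + M / n ^+ 2) * Dr h <= a j * Dr h.
    by rewrite ler_wpM2r // /a le_max lexx orbT.
  rewrite ipz.
  clearbody U z kap tau gr n j Dr a b. lra.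
move=> k; apply: le_trans (main k [::]) _.
rewrite lee_fin /Dr /= th_0 v_0.
exact: HC k.
Qed.
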